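(* For $\lambda>0$ and $c>0$, let $V\sim\mathrm{Exp}(\lambda)$ and define the creator's expected profit $$P(p_0,r)=\mathbb{E}\big[(p_0+rV)\,\mathbb{1}_{\{(1-r)V\ge p_0\}}\big]+p_0\,\Pr\big[(1-r)V<p_0\le V\big]-c,\qquad p_0\ge 0,\ r\in[0,1].$$ Let $u_c^*=\sup_{p_0\ge 0,r\in[0,1]}P(p_0,r)$ and $u_{c,r=0}^*=\sup_{p_0\ge0}P(p_0,0)$. Then the set $\mathbb{T}=\{(\lambda,c):\ u_c^*\ge 0,\ u_{c,r=0}^*<0,\ \lambda>0,\ c>0\}$ is non-empty.
   Context: Interpretation: information-asymmetry model in which a speculator observes the realized end-buyer valuation $v$, buys at price $p_0$ iff $(1-r)v\ge p_0$ and resells at $v$ paying royalty $rv$ to the creator; otherwise the creator sells directly to the end-buyer at $p_0$ iff $v\ge p_0$. $c$ is the creator's cost. Trade occurs iff the optimal profit is nonnegative. *)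

(* Defs.v *)
From HB Require Import structures.
From mathcomp Require Import all_boot all_order all_algebra.
From mathcomp Require Import all_classical all_reals all_analysis.
Set Implicit Arguments. Unset Strict Implicit. Unset Printing Implicit Defensive.
Import Order.TTheory GRing.Theory Num.Theory.
Local Open Scope classical_set_scope.
Local Open Scope ring_scope.

Definition creator_profit {R : realType} (lam c p0 r : R) : \bar R :=
  ((\int[lebesgue_measure]_(v in [set v : R | (p0 <= (1 - r) * v)%R])
      ((p0 + r * v) * exponential_pdf lam v)%:E)
   + p0%:E * exponential_prob lam [set v : R | ((1 - r) * v < p0 <= v)%R]
   - c%:E)%E.

Definition u_star {R : realType} (lam c : R) : \bar R :=
  ereal_sup [set u : \bar R | exists p0 r : R,
     [/\ (0 <= p0)%R, (0 <= r <= 1)%R & u = creator_profit lam c p0 r]].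

Definition u_star_r0 {R : realType} (lam c : R) : \bar R :=
  ereal_sup [set u : \bar R | exists p0 : R,
     (0 <= p0)%R /\ u = creator_profit lam c p0 0].

(* Main.v *)
Require Import Defs.
From HB Require Import structures.
From mathcomp Require Import all_boot all_order all_algebra.
From mathcomp Require Import all_classical all_reals all_analysis.
From mathcomp Require Import measurable_realfun lebesgue_integral.
From mathcomp Require Import lra.
Import Order.TTheory GRing.Theory Num.Theory.
Import numFieldTopology.Exports.
Local Open Scope classical_set_scope.
Local Open Scope ring_scope.

Section Helpers.
Variable R : realType.
Notation mu := (@lebesgue_measure R).

Lemma pdf1E (v : R) : 0 <= v -> exponential_pdf 1 v = expR (- v).
Proof. by move=> v0; rewrite exponential_pdfE // mul1r mulN1r. Qed.

Lemma pdf2E (v : R) : 0 <= v -> exponential_pdf 2 v = 2 * (expR (- v) * expR (- v)).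
Proof. by move=> v0; rewrite exponential_pdfE // -expRD; congr (_ * expR _); lra. Qed.

Lemma mpdf (r : R) : measurable_fun setT (EFin \o exponential_pdf r).
Proof. by apply/measurable_EFinP; exact: measurable_exponential_pdf. Qed.

Lemma mvpdf : measurable_fun setT (EFin \o (fun v : R => v * exponential_pdf 1 v)).
Proof.
apply/measurable_EFinP; apply: measurable_funM => //.
exact: measurable_exponential_pdf.
Qed.

Lemma vpdf_ge0 (v : R) : 0 <= v * exponential_pdf 1 v.
Proof.
case: (leP 0 v) => v0.
  by rewrite mulr_ge0 // exponential_pdf_ge0.
by rewrite lt0_exponential_pdf // mulr0.
Qed.

Lemma int_vpdf : ((1/2)%:E <= \int[mu]_v (v * exponential_pdf 1 v)%:E)%E.
Proof.
have H : (\int[mu]_v ((v * exponential_pdf 1 v)%:E + ((1/2) * exponential_pdf 2 v)%:E)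
   = \int[mu]_v (v * exponential_pdf 1 v)%:E + (1/2)%:E)%E.
  rewrite ge0_integralD //.
  - congr (_ + _)%E.
    under eq_integral do rewrite EFinM.
    rewrite ge0_integralZl_EFin //.
    + by rewrite integral_exponential_pdf // mule1.
    + by move=> x _; rewrite lee_fin exponential_pdf_ge0.
    + exact: mpdf.
  - by move=> x _; rewrite lee_fin vpdf_ge0.
  - exact: mvpdf.
  - by move=> x _; rewrite lee_fin mulr_ge0 // exponential_pdf_ge0.
  - apply/measurable_EFinP; apply: measurable_funM => //.
    exact: measurable_exponential_pdf.
have : (\int[mu]_v (exponential_pdf 1 v)%:E <=
   \int[mu]_v (v * exponential_pdf 1 v)%:E + (1/2)%:E)%E.
  rewrite -H.
  apply: ge0_le_integral => //.
  - by move=> x _; rewrite lee_fin exponential_pdf_ge0.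
  - exact: mpdf.
  - apply: emeasurable_funD; first exact: mvpdf.
    apply/measurable_EFinP; apply: measurable_funM => //.
    exact: measurable_exponential_pdf.
  - move=> x _; rewrite -EFinD lee_fin.
    case: (leP 0 x) => x0; last first.
      by rewrite !lt0_exponential_pdf // !mulr0 addr0.
    rewrite pdf1E // pdf2E //.
    have h1 := expR_ge1Dx (- x).
    have h2 := expR_gt0 (- x).
    move: h1 h2; move: (expR (- x)) => y h1 h2.
    nra.
rewrite integral_exponential_pdf //.
rewrite -leeBlDr //.
have -> : (1 - (1/2)%:E = (1/2)%:E :> \bar R)%E by rewrite -EFinB; congr EFin; lra.
by [].
Qed.


Let cexpN : continuous (fun z : R^o => expR (- 1 * z)).
Proof.
move=> z; apply: continuous_comp; last exact: continuous_expR.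
by apply: continuousM => //; apply: (@continuousN _ R^o); exact: cst_continuous.
Qed.

Lemma tail1 (a : R) : 0 <= a ->
  (\int[mu]_(x in `[a, +oo[) (exponential_pdf 1 x)%:E = (expR (- a))%:E)%E.
Proof.
move=> a0.
rewrite (@ge0_continuous_FTC2y _ (exponential_pdf 1) (fun x => - expR (- 1 * x)) a 0).
- by rewrite EFinN sub0e oppeK mulN1r.
- by move=> x _; exact: exponential_pdf_ge0.
- apply: (@continuous_subspaceW R^o _ _ [set` `[0, +oo[%R]).
  + by move=> x /=; rewrite !in_itv /= !andbT => h; exact: le_trans h.
  + exact: within_continuous_exponential_pdf.
- rewrite -oppr0; apply: cvgN.
  rewrite (_ : (fun x => expR (- 1 * x)) = (fun z => expR (- z)) \o (fun z => 1 * z)); last first.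
    by apply: eq_fun => x; rewrite mulNr.
  apply: (@cvg_comp _ _ _ _ _ _ (pinfty_nbhs R)); last exact: cvgr_expR.
  exact: gt0_cvgMry.
- by move=> z _; exact: ex_derive.
- by apply: cvgN; apply/cvg_at_right_filter; exact: cexpN.
- move=> z; rewrite in_itv /= andbT => az.
  by apply: derive1_exponential_pdf; rewrite in_itv /= andbT; exact: le_lt_trans az.
Qed.

End Helpers.

Theorem corollary5 (R : realType) :
  [set lc : R * R | (0 <= u_star lc.1 lc.2)%E /\ (u_star_r0 lc.1 lc.2 < 0)%E
                    /\ 0 < lc.1 /\ 0 < lc.2] !=set0.
Proof.
exists (1, 1/2) => /=; split; last split; [| |split; lra].
- apply: le_trans (ereal_sup_ubound _); last first.
    by exists 0, 1; split => //; rewrite ler01 lexx.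
  rewrite /creator_profit.
  rewrite (_ : [set v : R | 0 <= (1 - 1) * v] = setT); last first.
    by apply/seteqP; split => x //= _; rewrite subrr mul0r.
  under eq_integral do rewrite add0r mul1r.
  rewrite mul0e adde0 sube_ge0; last by rewrite fin_numE.
  exact: int_vpdf.
- apply: (@le_lt_trans _ _ ((expR (-1) - 1/2)%:E)).
    apply: ge_ereal_sup => u [p0 [p00 ->]].
    rewrite /creator_profit.
    rewrite (_ : [set v : R | p0 <= (1 - 0) * v] = `[p0, +oo[%classic); last first.
      by apply/seteqP; split => x /=; rewrite in_itv /= andbT subr0 mul1r.
    rewrite (_ : [set v : R | (1 - 0) * v < p0 <= v] = set0); last first.
      apply/seteqP; split => x //=; rewrite subr0 mul1r => /andP[h1 h2].
      by move: (lt_le_trans h1 h2); rewrite ltxx.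
    rewrite /exponential_prob integral_set0 mule0 adde0.
    under eq_integral do rewrite mul0r addr0 EFinM.
    rewrite ge0_integralZl_EFin //; last 2 first.
      by move=> x _; rewrite lee_fin exponential_pdf_ge0.
      apply: measurable_funTS; exact: mpdf.
    rewrite tail1 // -EFinM -EFinB lee_fin lerD2r.
    have h1 := expR_ge1Dx (p0 - 1).
    rewrite expRD in h1.
    have h2 := expRxMexpNx_1 p0.
    have h3 := expR_gt0 (- p0).
    have h4 := expR_gt0 (- 1 : R).
    move: h1 h2 h3 h4; move: (expR p0) (expR (- p0)) (expR (-1 : R)) => a b c h1 h2 h3 h4.
    nra.
  rewrite lte_fin.
  have h1 := expR_gt1Dx (oner_neq0 R).
  have h2 := expRxMexpNx_1 (1:R).
  have h4 := expR_gt0 (- 1 : R).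
  move: h1 h2 h4; move: (expR (1:R)) (expR (-1 : R)) => a c h1 h2 h4.
  nra.
Qed.
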